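(* Consider the discrete-time linear system monitored by a network of $p$ nodes $$x[t+1]=Ax[t],\qquad y_i[t]=C_ix[t]+e_i[t],\quad i\in\{1,\dots,p\},\ t\in\mathbb{N},$$ with $x[t]\in\mathbb{R}^n$, $A\in\mathbb{R}^{n\times n}$, $C_i\in\mathbb{R}^{1\times n}$ (so each measurement $y_i[t]\in\mathbb{R}$ is a scalar), and let $C\in\mathbb{R}^{p\times n}$ be the matrix with rows $C_1,\dots,C_p$. Suppose: (i) the nodes communicate over a time-invariant, undirected, connected graph with Laplacian $\mathcal{L}$; (ii) an adversary attacks a fixed (time-invariant) set of at most $s$ nodes, unknown to the nodes; for an attacked node $i$ the signal $e_i[t]$ is arbitrary, while $e_i[t]=0$ for all $t$ for every attack-free node; the adversary is omniscient (it knows the system model, the algorithms run at the nodes, the state and all measurements); (iii) $A$ and all matrices $C_1,\dots,C_p$ are known to every node; (iv) the adversary can only alter the measurements of attacked nodes; every node (attacked or not) executes its algorithm correctly; (v) for every eigenvalue $m+n'\mathbf{i}$ of $A$ with $|m+n'\mathbf{i}|\ge 1$ and every non-zero eigenvalue $\lambda$ of $\mathcal{L}$, $\left(m-\frac{\lambda^2}{\lambda_{\max}^2(\mathcal{L})}\right)^2+n'^2<1$, where $\lambda_{\max}(\mathcal{L})$ is the largest eigenvalue of $\mathcal{L}$. Then the decentralized secure state-tracking problem for this system and network is solvable if and only if the pair $(A,C)$ is $2s$-sparse detectable.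
   Context: Decentralized secure state-tracking (DSST) problem: find an algorithm run at each node $i$, whose inputs are node $i$'s own measurements $y_i$ and messages received from its neighbours in the communication graph, and whose output is an estimate $\hat x_i[t]\in\mathbb{R}^n$, such that for every initial state $x[0]\in\mathbb{R}^n$ and every admissible attack as in (ii), $\lim_{t\to\infty}\|\hat x_i[t]-x[t]\|=0$ for every node $i$. The problem is solvable if such an algorithm exists. A pair $(A,M)$ is detectable if every eigenvalue of $A$ of modulus $\ge 1$ is observable for $(A,M)$, i.e. $Mv\neq 0$ for every (complex) eigenvector $v$ of $A$ associated with an eigenvalue of modulus $\ge1$. Let $\mathbf{E}_p=\{\mathbf{e}_1,\dots,\mathbf{e}_p\}$ be the standard basis of $\mathbb{R}^p$. For $k\in\mathbb{N}$ let $\mathbf{Q}_k$ be the set of all real matrices $L$ with $p$ columns (any number of rows) such that $\ker(L)=\mathrm{span}\,V$ for some $V\subseteq\mathbf{E}_p$ with $|V|\le k$. The system is $k$-sparse detectable if $(A,LC)$ is detectable for every $L\in\mathbf{Q}_k$ (equivalently, $(A,C_{\mathcal K})$ is detectable for every set $\mathcal{K}$ of at least $p-k$ rows of $C$). *)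

(* Defs.v *)
From HB Require Import structures.
From mathcomp Require Import all_boot all_order all_algebra.
From mathcomp Require Import complex.
From mathcomp Require Import all_classical all_reals topology normedtype sequences.

Set Implicit Arguments.
Unset Strict Implicit.
Unset Printing Implicit Defensive.

Import Order.TTheory GRing.Theory Num.Theory.
Import numFieldNormedType.Exports.
Local Open Scope classical_set_scope.
Local Open Scope ring_scope.

Section DSST.
Variable R : realType.

Definition cplx_mx (m k : nat) (M : 'M[R]_(m, k)) : 'M[R[i]]_(m, k) :=
  map_mx (fun r => (r%:C)%C) M.

Definition cmod (mu : R[i]) : R := Num.sqrt (complex.Re mu ^+ 2 + complex.Im mu ^+ 2).

Definition detectable (n q : nat) (A : 'M[R]_n) (M : 'M[R]_(q, n)) : Prop :=
  forall (mu : R[i]) (v : 'cV[R[i]]_n),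
    v != 0 -> cplx_mx A *m v = mu *: v -> 1 <= cmod mu ->
    cplx_mx M *m v != 0.

(** L belongs to Q_k : L has p columns and ker L = span {e_j | j in V} for some
    V with |V| <= k.  span {e_j | j in V} is the set of vectors supported in V. *)
Definition in_Qk (p k r : nat) (L : 'M[R]_(r, p)) : Prop :=
  exists V : {set 'I_p}, (#|V| <= k)%N /\
    forall w : 'cV[R]_p, L *m w = 0 <-> (forall j, j \notin V -> w j 0 = 0).

Definition sparse_detectable (n p k : nat) (A : 'M[R]_n) (C : 'M[R]_(p, n)) : Prop :=
  forall (r : nat) (L : 'M[R]_(r, p)), in_Qk k L -> detectable A (L *m C).

Definition laplacian (p : nat) (adj : rel 'I_p) : 'M[R]_p :=
  \matrix_(i, j) (if i == j then (#|[set k | adj i k]|)%:R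
                  else if adj i j then -1 else 0).

Definition real_eig (p : nat) (M : 'M[R]_p) (lam : R) : Prop :=
  exists v : 'cV[R]_p, v != 0 /\ M *m v = lam *: v.

Definition is_max_eig (p : nat) (M : 'M[R]_p) (lmax : R) : Prop :=
  real_eig M lmax /\ forall lam, real_eig M lam -> lam <= lmax.

Definition cond_v (n p : nat) (A : 'M[R]_n) (Lap : 'M[R]_p) : Prop :=
  forall lmax : R, is_max_eig Lap lmax ->
  forall (mu : R[i]) (v : 'cV[R[i]]_n), v != 0 -> cplx_mx A *m v = mu *: v ->
    1 <= cmod mu ->
  forall lam : R, real_eig Lap lam -> lam != 0 ->
    (complex.Re mu - lam ^+ 2 / lmax ^+ 2) ^+ 2 + complex.Im mu ^+ 2 < 1.

(** A decentralized algorithm (one communication round per time step). *)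
Record algorithm (p n : nat) := Algorithm {
  st : Type;
  msg : Type;
  init : 'I_p -> st;
  (* send j i z y : message from node j to node i *)
  send : 'I_p -> 'I_p -> st -> R -> msg;
  upd : 'I_p -> st -> R -> ('I_p -> option msg) -> st;
  out : 'I_p -> st -> R -> 'cV[R]_n
}.

Fixpoint run (p n : nat) (adj : rel 'I_p) (alg : algorithm p n)
    (y : 'I_p -> nat -> R) (t : nat) : 'I_p -> st alg :=
  match t with
  | 0 => @init p n alg
  | t'.+1 => fun i =>
      @upd p n alg i (run adj alg y t' i) (y i t')
        (fun j => if adj i j then Some (@send p n alg j i (run adj alg y t' j) (y j t'))
                  else None)
  end.

Definition estimate (p n : nat) (adj : rel 'I_p) (alg : algorithm p n)
    (y : 'I_p -> nat -> R) (i : 'I_p) (t : nat) : 'cV[R]_n :=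
  @out p n alg i (run adj alg y t i) (y i t).

Definition traj (n : nat) (A : 'M[R]_n) (x0 : 'cV[R]_n) (t : nat) : 'cV[R]_n :=
  A ^+ t *m x0.

Definition meas (n p : nat) (A : 'M[R]_n) (C : 'M[R]_(p, n)) (x0 : 'cV[R]_n)
    (e : 'I_p -> nat -> R) (i : 'I_p) (t : nat) : R :=
  (row i C *m traj A x0 t) 0 0 + e i t.

Definition DSST_solvable (n p : nat) (A : 'M[R]_n) (C : 'M[R]_(p, n))
    (adj : rel 'I_p) (s : nat) : Prop :=
  exists alg : algorithm p n,
    forall (x0 : 'cV[R]_n) (S : {set 'I_p}) (e : 'I_p -> nat -> R),
      (#|S| <= s)%N ->
      (forall i, i \notin S -> forall t, e i t = 0) ->
      forall i : 'I_p,
        (fun t => `| estimate adj alg (meas A C x0 e) i t - traj A x0 t |)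
          @ \oo --> (0 : R).

End DSST.

(* Main.v *)
Require Import Defs.
From HB Require Import structures.
From mathcomp Require Import all_boot all_order all_algebra.
From mathcomp Require Import complex.
From mathcomp Require Import all_classical all_reals topology normedtype sequences.
From mathcomp Require Import fingraph.
From mathcomp Require Import ring lra zify.

Import Order.TTheory GRing.Theory Num.Theory.
Import numFieldNormedType.Exports.
Local Open Scope classical_set_scope.
Local Open Scope ring_scope.


Section Seqs.
Variable R : realType.

Definition t0 (a : nat -> R) :=
  forall e : R, 0 < e -> exists N, forall t, (N <= t)%N -> `|a t| < e.

Lemma t0_cvg (a : nat -> R) : t0 a -> a @ \oo --> (0 : R).
Proof.
move=> H; apply/cvgr0Pnorm_lt => e e0.
have [N HN] := H e e0; exists N => // t /= Ht; exact: HN.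
Qed.

Lemma cvg_t0 (a : nat -> R) : a @ \oo --> (0 : R) -> t0 a.
Proof.
move/cvgr0Pnorm_lt => H e e0.
have [N _ HN] := H e e0; exists N => t Ht; exact: HN.
Qed.

Lemma rec_t0 (a b : nat -> R) (q : R) : 0 <= q -> q < 1 ->
  (forall t, 0 <= a t) -> (forall t, a t.+1 <= q * a t + b t) -> t0 b -> t0 a.
Proof.
move=> q0 q1 a0 rec hb e e0.
have e1 : 0 < e * (1 - q) / 2 by apply: divr_gt0 => //; apply: mulr_gt0 => //; lra.
have [N HN] := hb _ e1.
have claim : forall k, a (N + k)%N <= q ^+ k * a N + e / 2.
  elim=> [|k IH]; first by rewrite addn0 expr0 mul1r lerDl; lra.
  rewrite addnS; apply: le_trans (rec _) _.
  have hbN : b (N + k)%N <= e * (1 - q) / 2.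
    by apply: le_trans (ltW (HN _ (leq_addr _ _))); exact: ler_norm.
  apply: le_trans (lerD (ler_wpM2l q0 IH) hbN) _.
  by rewrite exprS le_eqVlt; apply/orP; left; apply/eqP; field.
have aN0 := a0 N.
have d0 : 0 < e / 2 / (a N + 1) by apply: divr_gt0; lra.
have hq1 : `|q| < 1 by rewrite ger0_norm.
have [M HM] := @cvg_t0 (fun k => q ^+ k) (cvg_expr hq1) _ d0.
exists (N + M)%N => t Ht.
have -> : t = (N + (t - N))%N by rewrite subnKC // (leq_trans (leq_addr _ _) Ht).
rewrite ger0_norm //.
apply: le_lt_trans (claim _) _.
have hq : q ^+ (t - N) < e / 2 / (a N + 1).
  apply: le_lt_trans (ler_norm _) (HM _ _); rewrite leq_subRL ?(leq_trans (leq_addr _ _) Ht) //.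
have hq0 : 0 <= q ^+ (t - N) by apply: exprn_ge0.
have : q ^+ (t - N) * a N <= e / 2 / (a N + 1) * a N by apply: ler_wpM2r => //; apply: ltW.
have -> : e / 2 / (a N + 1) * a N = e / 2 - e / 2 / (a N + 1) by field; lra.
lra.
Qed.

End Seqs.
Arguments t0 {R}.
Arguments rec_t0 {R}.
Arguments t0_cvg {R}.
Arguments cvg_t0 {R}.


Section Cplx.
Variable R : realType.

Lemma cmodE (z : R[i]) : ((cmod z)%:C)%C = `|z|.
Proof. by rewrite normc_def. Qed.

Lemma cmod_ge0 (z : R[i]) : 0 <= cmod z.
Proof. exact: sqrtr_ge0. Qed.

Lemma cmodM (x y : R[i]) : cmod (x * y) = cmod x * cmod y.
Proof. by apply: (@complexI R); rewrite rmorphM /= !cmodE normrM. Qed.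

Lemma cmodD (x y : R[i]) : cmod (x + y) <= cmod x + cmod y.
Proof. by rewrite -lecR rmorphD /= !cmodE ler_normD. Qed.

Lemma cmodX (x : R[i]) k : cmod (x ^+ k) = cmod x ^+ k.
Proof. by apply: (@complexI R); rewrite rmorphXn /= !cmodE normrX. Qed.

Lemma cmod0 : cmod (0 : R[i]) = 0.
Proof. by apply: (@complexI R); rewrite cmodE normr0. Qed.

Lemma cmod_eq0 (z : R[i]) : (cmod z == 0) = (z == 0).
Proof. by rewrite -(inj_eq (@complexI R)) cmodE normr_eq0. Qed.

Lemma cmod_Re (z : R[i]) : `|complex.Re z| <= cmod z.
Proof. by rewrite -lecR cmodE normc_ge_Re. Qed.

Lemma cmod_ReIm (z : R[i]) : cmod z <= `|complex.Re z| + `|complex.Im z|.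
Proof.
case: z => a b; rewrite /cmod /=.
have h0 : 0 <= `|a| + `|b| by rewrite addr_ge0.
apply: (@le_trans _ _ (Num.sqrt ((`|a| + `|b|) ^+ 2))); last by rewrite sqrtr_sqr ger0_norm.
rewrite ler_sqrt ?sqr_ge0 //.
rewrite sqrrD -(real_normK (num_real a)) -(real_normK (num_real b)).
by rewrite addrAC lerDl mulrn_wge0 // mulr_ge0.
Qed.

Lemma cplx_mxM m k l (A : 'M[R]_(m, k)) (B : 'M[R]_(k, l)) :
  cplx_mx (A *m B) = cplx_mx A *m cplx_mx B.
Proof. exact: (map_mxM (real_complex R)). Qed.

Lemma cplx_mxX n (A : 'M[R]_n.+1) t : cplx_mx (A ^+ t) = cplx_mx A ^+ t.
Proof.
elim: t => [|t IH]; first by apply/matrixP => i j; rewrite !mxE; case: (i == j).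
by rewrite !exprS -!mulmxE cplx_mxM IH.
Qed.

Lemma cplx_mx0 m k : cplx_mx (0 : 'M[R]_(m, k)) = 0.
Proof. by apply/matrixP => i j; rewrite !mxE. Qed.

Lemma cplx_mxK m k (A : 'M[R]_(m, k)) i j : complex.Re (cplx_mx A i j) = A i j.
Proof. by rewrite mxE. Qed.

End Cplx.


Lemma hornermxE (F : comNzRingType) n (B : 'M[F]_n.+1) (p : {poly F}) :
  horner_mx B p = \sum_(i < size p) p`_i *: B ^+ i.
Proof.
rewrite -{1}[p]coefK poly_def raddf_sum; apply: eq_bigr => i _.
by have := horner_mxZ B (p`_i) (GRing.exp (polyX F) i); rewrite /= => ->; rewrite rmorphXn /= horner_mx_X.
Qed.

Section Spec.
Variable R : realType.
Variable n : nat.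
Variable A : 'M[R]_n.+1.
Variable r : nat.
Variable M : 'M[R]_(r, n.+1).

Let Ac := cplx_mx A.
Let Mc := cplx_mx M.

Definition Pq (y : 'cV[R[i]]_n.+1) := forall q, Mc *m (horner_mx Ac q *m y) = 0.

Lemma Pq_pow y : (forall t, Mc *m (Ac ^+ t *m y) = 0) -> Pq y.
Proof.
move=> H q; rewrite hornermxE mulmx_suml mulmx_sumr big1 // => i _.
by rewrite -scalemxAl -scalemxAr H scaler0.
Qed.

Lemma hornerMm p q (y : 'cV[R[i]]_n.+1) :
  horner_mx Ac (p * q) *m y = horner_mx Ac p *m (horner_mx Ac q *m y).
Proof. by rewrite rmorphM mulmxA. Qed.

Lemma Pq_horner y q' : Pq y -> Pq (horner_mx Ac q' *m y).
Proof. by move=> H q; rewrite -hornerMm; exact: H. Qed.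

Lemma horner_lin (mu : R[i]) : horner_mx Ac ('X - mu%:P) = Ac - mu%:M.
Proof. by rewrite rmorphB /= horner_mx_X horner_mx_C. Qed.

Lemma big_inj (l : seq R[i]) y : detectable A M ->
  all (fun mu => 1 <= cmod mu) l -> Pq y ->
  horner_mx Ac (\prod_(mu <- l) ('X - mu%:P)) *m y = 0 -> y = 0.
Proof.
move=> hdet; elim: l y => [|mu l IH] y /=.
  by move=> _ _; rewrite big_nil rmorph1 mul1mx.
move=> /andP[hmu hl] hy; rewrite big_cons hornerMm horner_lin.
set z := horner_mx Ac _ *m y => hz.
apply: (IH _ hl hy).
apply/eqP; apply: contraT => zn0.
have hPz : Pq z by exact: Pq_horner.
have eig : Ac *m z = mu *: z.
  by apply/eqP; rewrite -subr_eq0 -mul_scalar_mx -mulmxBl hz.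
have := hdet mu z zn0 eig hmu.
by have := hPz 1; rewrite rmorph1 mul1mx => ->; rewrite eqxx.
Qed.

Definition ct0 (g : nat -> 'cV[R[i]]_n.+1) := forall k, t0 (fun t => cmod (g t k 0)).

Lemma small_cvg (l : seq R[i]) x :
  all (fun mu => cmod mu < 1) l ->
  horner_mx Ac (\prod_(mu <- l) ('X - mu%:P)) *m x = 0 ->
  ct0 (fun t => Ac ^+ t *m x).
Proof.
elim: l x => [|mu l IH] x /=.
  move=> _; rewrite big_nil rmorph1 mul1mx => -> k e e0; exists 0%N => t _.
  by rewrite mulmx0 mxE cmod0 normr0.
move=> /andP[hmu hl] hx.
have hx' : horner_mx Ac (\prod_(mu <- l) ('X - mu%:P)) *m ((Ac - mu%:M) *m x) = 0.
  by move: hx; rewrite big_cons -horner_lin -hornerMm [X in horner_mx _ X]mulrC.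
have IHx := IH _ hl hx'.
move=> k.
apply: (@rec_t0 _ _ (fun t => cmod ((Ac ^+ t *m ((Ac - mu%:M) *m x)) k 0)) (cmod mu)).
- exact: cmod_ge0.
- by [].
- by move=> t; exact: cmod_ge0.
- move=> t.
  have -> : Ac ^+ t.+1 *m x = mu *: (Ac ^+ t *m x) + Ac ^+ t *m ((Ac - mu%:M) *m x).
    rewrite mulmxBl mulmxBr mul_scalar_mx -scalemxAr addrC subrK.
    by rewrite mulmxA mulmxE -exprSr.
  rewrite mxE [X in cmod (X + _)]mxE.
  by rewrite -cmodM; exact: cmodD.
- exact: IHx.
Qed.

End Spec.
Arguments Pq {R n} A {r} M y.
Arguments big_inj {R n A r M} l y.
Arguments small_cvg {R n A} l x.
Arguments Pq_pow {R n A r M} y.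
Arguments Pq_horner {R n A r M} y q'.
Arguments hornerMm {R n A} p q y.
Arguments horner_lin {R n A} mu.
Arguments ct0 {R n} g.


Section Spec2.
Variable R : realType.

Lemma CH_ext n (A : 'M[R]_n.+1) m (c : 'M[R]_(m, n.+1)) (w : 'cV[R]_n.+1) :
  (forall t, (t < n.+1)%N -> c *m (A ^+ t *m w) = 0) ->
  forall t, c *m (A ^+ t *m w) = 0.
Proof.
move=> H t.
have -> : A ^+ t = horner_mx A ('X^t %% char_poly A).
  have := congr1 (horner_mx A) (divp_eq 'X^t (char_poly A)).
  by rewrite rmorphD rmorphM /= Cayley_Hamilton mulr0 add0r rmorphXn /= horner_mx_X.
rewrite hornermxE mulmx_suml mulmx_sumr big1 // => i _.
rewrite -scalemxAl -scalemxAr H ?scaler0 //.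
have := ltn_modp 'X^t (char_poly A).
rewrite size_char_poly monic_neq0 ?char_poly_monic // => hs.
exact: leq_trans (ltn_ord i) _.
Qed.

Lemma norm_entry n (v : 'cV[R]_n) k : `|v k 0| <= `|v|.
Proof.
have -> : `|v| = mx_norm v by [].
rewrite mx_normrE.
exact: (le_bigmax _ (fun ij : 'I_n * 'I_1 => `|v ij.1 ij.2|) (k, 0)).
Qed.

Lemma spectral n (A : 'M[R]_n.+1) r (M : 'M[R]_(r, n.+1)) (w : 'cV[R]_n.+1) :
  detectable A M -> (forall t, M *m (A ^+ t *m w) = 0) ->
  t0 (fun t => `|A ^+ t *m w|).
Proof.
move=> hdet hw.
set Ac := cplx_mx A; set wc := cplx_mx w.
have hP : Pq A M wc.
  by apply: Pq_pow => t; rewrite -cplx_mxX -!cplx_mxM hw cplx_mx0.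
have [rs Hrs] := closed_field_poly_normal (char_poly Ac).
have hlead : lead_coef (char_poly Ac) = 1 by apply/monicP; exact: char_poly_monic.
rewrite hlead scale1r in Hrs.
have CH := Cayley_Hamilton Ac.
set bg := [seq mu <- rs | 1 <= cmod mu].
set sm := [seq mu <- rs | ~~ (1 <= cmod mu)].
have E : \prod_(mu <- rs) ('X - mu%:P) =
    \prod_(mu <- bg) ('X - mu%:P) * \prod_(mu <- sm) ('X - mu%:P).
  by rewrite /bg /sm !big_filter (bigID (fun mu => 1 <= cmod mu)).
rewrite Hrs E in CH.
have hy : horner_mx Ac (\prod_(mu <- sm) ('X - mu%:P)) *m wc = 0.
  apply: (@big_inj R n A r M bg) => //.
  - by apply/allP => mu; rewrite mem_filter => /andP[].
  - exact: Pq_horner.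
  - by rewrite -hornerMm CH mul0mx.
have hsm : all (fun mu => cmod mu < 1) sm.
  by apply/allP => mu; rewrite mem_filter => /andP[h _]; rewrite ltNge.
have hc := small_cvg sm wc hsm hy.
move=> e e0.
have : forall k : 'I_n.+1, exists N, forall t, (N <= t)%N -> `|(A ^+ t *m w) k 0| < e.
  move=> k; have [N HN] := hc k e e0; exists N => t Ht.
  have := HN t Ht; rewrite ger0_norm ?cmod_ge0 // => h; apply: le_lt_trans h.
  rewrite /Ac /wc -cplx_mxX -cplx_mxM.
  by have := @cmod_Re R (cplx_mx (A ^+ t *m w) k 0); rewrite cplx_mxK.
move/choice => [Nf HN].
exists (\max_k Nf k)%N => t Ht.
rewrite ger0_norm ?normr_ge0 //.
have -> : `|A ^+ t *m w| = mx_norm (A ^+ t *m w) by [].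
rewrite mx_normrE; apply: bigmax_lt => // [[i j]] _ /=.
rewrite (ord1 j); apply: HN; apply: leq_trans Ht.
exact: leq_bigmax.
Qed.

End Spec2.


Section Flood.
Variable R : realType.
Variable p : nat.

Definition Kn := 'I_p -> nat -> option R.

Definition updK (K : Kn) (j : 'I_p) (tau : nat) (v : R) : Kn :=
  fun j' tau' => if (j' == j) && (tau' == tau) then Some v else K j' tau'.

Definition merge (K : Kn) (ms : 'I_p -> option Kn) : Kn := fun j tau =>
  if K j tau is Some v then Some v else
  foldr (fun k acc => if ms k is Some K2 then
            (if K2 j tau is Some v then Some v else acc) else acc)
        None (enum 'I_p).

Definition sound (Y : 'I_p -> nat -> R) (K : Kn) :=
  forall j tau v, K j tau = Some v -> v = Y j tau.

Lemma merge_sound Y (K : Kn) (ms : 'I_p -> option Kn) : sound Y K ->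
  (forall k K2, ms k = Some K2 -> sound Y K2) -> sound Y (merge K ms).
Proof.
move=> hK hms j tau v; rewrite /merge.
case E: (K j tau) => [u|]; first by move=> [<-]; exact: hK E.
elim: (enum 'I_p) => //= k l IH.
case E2: (ms k) => [K2|] //.
case E3: (K2 j tau) => [u|] //.
by move=> [<-]; exact: hms E2 _ _ _ E3.
Qed.

Lemma merge_known1 (K : Kn) (ms : 'I_p -> option Kn) j tau : K j tau != None -> merge K ms j tau != None.
Proof. by rewrite /merge; case: (K j tau). Qed.

Lemma merge_known2 (K : Kn) (ms : 'I_p -> option Kn) j tau k (K2 : Kn) : ms k = Some K2 -> K2 j tau != None ->
  merge K ms j tau != None.
Proof.
move=> E hk; rewrite /merge; case: (K j tau) => // .
have : k \in enum 'I_p by rewrite mem_enum.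
elim: (enum 'I_p) => //= k' l IH.
rewrite in_cons => /orP[/eqP <-|hkl].
  by rewrite E; move: hk; case: (K2 j tau).
case: (ms k') => [K3|]; last exact: IH.
by case: (K3 j tau) => //; exact: IH.
Qed.

Lemma updK_known K j tau j' tau' v : K j tau != None -> updK K j' tau' v j tau != None.
Proof. by rewrite /updK; case: ifP. Qed.

Lemma updK_self K j tau v : updK K j tau v j tau = Some v.
Proof. by rewrite /updK !eqxx. Qed.

Lemma updK_sound Y K j tau v : sound Y K -> v = Y j tau -> sound Y (updK K j tau v).
Proof.
move=> hK hv j' tau' u; rewrite /updK.
case: ifP => [/andP[/eqP -> /eqP ->] [<-] //|_]; exact: hK.
Qed.


Variable n : nat.
Variable o : nat -> Kn -> 'cV[R]_n.

Definition flood : algorithm R p n :=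
  @Algorithm R p n (nat * Kn)%type Kn (fun _ => (0%N, fun _ _ => None))
    (fun j i z v => updK z.2 j z.1 v)
    (fun i z v ms => (z.1.+1, merge (updK z.2 i z.1 v) ms))
    (fun i z v => o z.1 z.2).

Variable adj : rel 'I_p.
Variable y : 'I_p -> nat -> R.

Lemma run_time t i : (run adj flood y t i).1 = t.
Proof. by elim: t i => //= t IH i; rewrite IH. Qed.

Lemma run_sound t i : sound y (run adj flood y t i).2.
Proof.
elim: t i => [|t IH] i /=; first by [].
apply: merge_sound; first by apply: updK_sound => //; rewrite run_time.
move=> k K2; case: (adj i k) => // -[<-].
by apply: updK_sound => //; rewrite run_time.
Qed.

Lemma run_known t i s' tau : path adj i s' -> (tau + size s' + 1 <= t)%N ->
  (run adj flood y t i).2 (last i s') tau != None.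
Proof.
elim: t i s' => [|t IH] i s'; first by rewrite addn1.
case: s' => [|k s'] /=.
  move=> _; rewrite addn0 addn1 ltnS leq_eqVlt => /orP[/eqP ->|ht].
    by apply: merge_known1; rewrite run_time updK_self.
  apply: merge_known1; apply: updK_known.
  by have := IH i [::] isT; rewrite /= addn0 addn1; apply.
move=> /andP[hik hp] ht.
apply: (@merge_known2 _ _ _ _ k); first by rewrite hik.
apply: updK_known; apply: IH => //.
by move: ht; lia.
Qed.

Lemma estimate_flood i t : estimate adj flood y i t = o t (run adj flood y t i).2.
Proof. by rewrite /estimate /= run_time. Qed.

Lemma conn_short : (forall i j : 'I_p, connect adj i j) ->
  forall i j, exists s', [/\ path adj i s', last i s' = j & (size s' < p)%N].
Proof.
move=> hc i j; have /connectP [s0 hp ->] := hc i j.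
case: (shortenP hp) => s1 hp1 hu _.
exists s1; split => //.
have := card_uniqP hu; rewrite /= => hs.
have : (#|i :: s1| <= #|'I_p|)%N by exact: max_card.
by rewrite hs card_ord.
Qed.

Lemma all_known : (forall i j : 'I_p, connect adj i j) ->
  forall t i j tau, (tau + p <= t)%N -> (run adj flood y t i).2 j tau != None.
Proof.
move=> hc t i j tau ht; have [s1 [hp hl hs]] := conn_short hc i j.
rewrite -hl; apply: run_known => //.
by apply: leq_trans ht; rewrite -addnA leq_add2l addn1.
Qed.

End Flood.


Lemma nonincr_stab (f : nat -> nat) : (forall T, (f T.+1 <= f T)%N) ->
  exists T0, forall T, (T0 <= T)%N -> f T = f T0.
Proof.
move=> hf.
have mono : forall T1 T, (T1 <= T)%N -> (f T <= f T1)%N.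
  move=> T1 T /subnK <-; elim: (T - T1)%N => // k IH.
  by rewrite addSn; exact: leq_trans (hf _) IH.
suff H' : forall m T1, (f T1 <= m)%N -> exists T0, forall T, (T0 <= T)%N -> f T = f T0.
  exact: (H' (f 0%N) 0%N (leqnn _)).
elim=> [|m IH] T1 h1.
  exists T1 => T hT; apply/eqP; rewrite eqn_leq mono //=.
  by move: h1; rewrite leqn0 => /eqP ->.
case: (pselect (exists T2, (T1 <= T2)%N /\ f T2 <> f T1)) => [[T2 [h12 hne]]|H].
  apply: (IH T2).
  have : (f T2 < f T1)%N by rewrite ltn_neqAle mono // andbT; apply/eqP.
  by move=> h; rewrite -ltnS; apply: leq_trans h h1.
exists T1 => T hT; case: (pselect (f T = f T1)) => // hne.
by exfalso; apply: H; exists T.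
Qed.

Section Est.
Variable R : realType.
Variables (p n' s : nat).
Variable A : 'M[R]_n'.+1.
Variable C : 'M[R]_(p, n'.+1).

Definition cons (D : 'I_p -> nat -> R) (T : nat) (K : {set 'I_p}) (x : 'cV[R]_n'.+1) : Prop :=
  forall j, j \in K -> forall tau, (tau <= T)%N -> (row j C *m (A ^+ tau *m x)) 0 0 = D j tau.

Definition gb (c : {set 'I_p} -> 'cV[R]_n'.+1 -> Prop) (K : {set 'I_p}) : bool :=
  (#|~: K| <= s)%N && `[< exists x, c K x >].

Definition xhat_of (c : {set 'I_p} -> 'cV[R]_n'.+1 -> Prop) : 'cV[R]_n'.+1 :=
  if [pick K | gb c K] is Some K then xget 0 (c K) else 0.

Definition xhat D T := xhat_of (cons D T).

Lemma cons_ext D1 D2 T : (forall j tau, (tau <= T)%N -> D1 j tau = D2 j tau) ->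
  cons D1 T = cons D2 T.
Proof.
move=> h; apply: funext => K; apply: funext => x; apply: propext.
by split => H j hj tau ht; [rewrite -h | rewrite h] => //; exact: H.
Qed.

Lemma xhat_ext D1 D2 T : (forall j tau, (tau <= T)%N -> D1 j tau = D2 j tau) ->
  xhat D1 T = xhat D2 T.
Proof. by move=> h; rewrite /xhat (cons_ext _ _ _ h). Qed.

Lemma cons_mono D T T' K x : cons D T K x -> (T' <= T)%N -> cons D T' K x.
Proof. by move=> H hT j hj tau ht; apply: H => //; exact: leq_trans hT. Qed.

Lemma gb_mono D T T' K : gb (cons D T) K -> (T' <= T)%N -> gb (cons D T') K.
Proof.
move=> /andP[h1 /asboolP [x hx]] hT; rewrite /gb h1 /=.
by apply/asboolP; exists x; exact: cons_mono hx hT.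
Qed.

Variable y : 'I_p -> nat -> R.
Variable x0 : 'cV[R]_n'.+1.
Variable H : {set 'I_p}.
Hypothesis hH : (#|~: H| <= s)%N.
Hypothesis hx0 : forall T, cons y T H x0.

Lemma stabilize : exists xs K1 T1, [/\ (forall T, cons y T K1 xs), (#|~: K1| <= s)%N &
  forall T, (T1 <= T)%N -> xhat y T = xs].
Proof.
pose G T := finset (fun K : {set 'I_p} => gb (cons y T) K).
have Gmono : forall T T', (T' <= T)%N -> G T \subset G T'.
  move=> T T' hT; rewrite /G; apply/fintype.subsetP => K; rewrite !inE => hK; exact: gb_mono hK hT.
have HG : forall T, H \in G T.
  by move=> T; rewrite inE /gb hH /=; apply/asboolP; exists x0.
have [T0 hT0] := @nonincr_stab (fun T => #|G T|)
  (fun T => subset_leq_card (Gmono _ _ (leqnSn T))).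
have GT : forall T, (T0 <= T)%N -> G T = G T0.
  by move=> T hT; apply/eqP; rewrite eqEcard (Gmono _ _ hT) /=; have := hT0 T hT; rewrite /= => ->.
have [K1 hK1 pickE] : exists2 K1, K1 \in G T0 &
    forall T, (T0 <= T)%N -> [pick K | gb (cons y T) K] = Some K1.
  have [K1 hK1 E] : exists2 K1, K1 \in G T0 & [pick K in G T0] = Some K1.
    case: pickP => [K1 hK1|hn]; first by exists K1.
    by move: (hn H); rewrite /= HG.
  exists K1 => // T2 hT2; rewrite -E; apply: eq_pick => K /=.
  by rewrite -(GT T2 hT2) inE.
have K1good : forall T, gb (cons y T) K1.
  move=> T; case: (leqP T0 T) => hT.
    by have := hK1; rewrite -(GT T hT) inE.
  by have := hK1; rewrite inE => h; exact: gb_mono h (ltnW hT).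
have hK1s : (#|~: K1| <= s)%N by case/andP: (K1good 0%N).
pose T1 := maxn T0 n'.
have consE : forall T, (T1 <= T)%N -> cons y T K1 = cons y T1 K1.
  move=> T hT; apply: funext => x; apply: propext; split => hx.
    exact: cons_mono hx hT.
  have /andP[_ /asboolP [x1 hx1]] := K1good T.
  move=> j hj tau htau.
  have h0 : forall t, row j C *m (A ^+ t *m (x - x1)) = 0.
    apply: CH_ext => t ht; have ht' : (t <= T1)%N by apply: leq_trans (leq_maxr _ _); rewrite -ltnS.
    have e1 := hx j hj t ht'.
    have e2 := hx1 j hj t (leq_trans ht' hT).
    have : row j C *m (A ^+ t *m x) = row j C *m (A ^+ t *m x1).
      by apply/matrixP => a b; rewrite !ord1 e1 e2.
    by rewrite !mulmxBr => ->; rewrite subrr.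
  have := h0 tau; rewrite !mulmxBr => /eqP; rewrite subr_eq0 => /eqP ->.
  exact: hx1.
pose xs := xget 0 (cons y T1 K1).
have hxs1 : cons y T1 K1 xs.
  by apply: xgetPex; case/andP: (K1good T1) => _ /asboolP.
exists xs, K1, T1; split => //.
  move=> T; case: (leqP T1 T) => hT; first by rewrite consE.
  exact: cons_mono hxs1 (ltnW hT).
move=> T hT; rewrite /xhat /xhat_of pickE; last exact: leq_trans (leq_maxl _ _) hT.
by rewrite consE.
Qed.

End Est.


Lemma suff_dir (R : realType) (p n' s : nat) (A : 'M[R]_n'.+1) (C : 'M[R]_(p, n'.+1))
  (adj : rel 'I_p) : (forall i j, connect adj i j) ->
  sparse_detectable (2 * s) A C -> DSST_solvable A C adj s.
Proof.
move=> hc hsd.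
pose o := fun t (K : Kn R p) =>
  A ^+ t *m @xhat R p n' s A C (fun j tau => odflt 0 (K j tau)) (t - p)%N.
exists (@flood R p n'.+1 o) => x0 S e hS he i.
set y := meas A C x0 e.
have hx0 : forall T, @cons R p n' A C y T (~: S) x0.
  move=> T j; rewrite inE => hj tau _.
  by rewrite /y /meas /traj he // addr0.
have hH : (#|~: ~: S| <= s)%N by rewrite finset.setCK.
have [xs [K1 [T1 [hxs hK1 hT1]]]] := @stabilize R p n' s A C y x0 (~: S) hH hx0.
set w := xs - x0.
set K0 := K1 :&: ~: S.
pose L := diag_mx (\row_j ((j \in K0)%:R : R)).
have hQ : in_Qk (2 * s) L.
  exists (~: K0); split.
    rewrite finset.setCI finset.setCK cardsU; apply: leq_trans (leq_subr _ _) _.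
    by rewrite mul2n -addnn leq_add.
  move=> v; split.
    move=> hv j; rewrite inE negbK => hj.
    by move/matrixP: hv => /(_ j 0); rewrite mul_diag_mx !mxE hj mul1r.
  move=> hv; apply/matrixP => a b; rewrite (ord1 b) mul_diag_mx !mxE.
  case: (boolP (a \in K0)) => ha; last by rewrite mul0r.
  by rewrite hv ?mulr0 // inE negbK.
have hdet := hsd _ L hQ.
have hw : forall t, (L *m C) *m (A ^+ t *m w) = 0.
  move=> t; apply/matrixP => a b; rewrite (ord1 b) -mulmxA mul_diag_mx !mxE.
  case: (boolP (a \in K0)) => ha; last by rewrite mul0r.
  move: ha; rewrite inE => /andP[h1 h2].
  have E1 : row a C *m (A ^+ t *m xs) = row a C *m (A ^+ t *m x0).
    apply/matrixP => u v; rewrite !ord1 (hxs t a h1 t (leqnn t)).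
    by rewrite (hx0 t a h2 t (leqnn t)).
  have e1 : forall M : 'cV[R]_n'.+1, (C *m M) a 0 = (row a C *m M) 0 0.
    by move=> M; rewrite -row_mul [RHS]mxE.
  have Z : (C *m (A ^+ t *m w)) a 0 = 0 by rewrite e1 /w !mulmxBr E1 subrr mxE.
  by move: Z; rewrite !mxE => ->; rewrite mulr0.
have hsp := @spectral R n' A p (L *m C) w hdet hw.
apply: t0_cvg => eps heps.
have [N HN] := hsp eps heps.
exists (maxn N (T1 + p)) => t ht.
rewrite estimate_flood /o.
have hxe : @xhat R p n' s A C (fun j tau => odflt 0 ((run adj (@flood R p n'.+1 o) y t i).2 j tau)) (t - p)%N
    = @xhat R p n' s A C y (t - p)%N.
  apply: xhat_ext => j tau htau.
  have hk := @all_known R p n'.+1 o adj y hc t i j tau.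
  have : (tau + p <= t)%N by move: ht htau; rewrite geq_max; lia.
  move/hk; case E: ((run adj (@flood R p n'.+1 o) y t i).2 j tau) => [v|] //= _.
  exact: (@run_sound R p n'.+1 o adj y t i j tau v E).
rewrite hxe hT1; last by move: ht; rewrite geq_max; lia.
rewrite /traj -mulmxBr.
by apply: HN; move: ht; rewrite geq_max => /andP[].
Qed.


Set Implicit Arguments.
Unset Strict Implicit.

Lemma split_set p (V : {set 'I_p}) s : (#|V| <= 2 * s)%N ->
  exists V1 : {set 'I_p}, [/\ V1 \subset V, (#|V1| <= s)%N & (#|V :\: V1| <= s)%N].
Proof.
move=> hV.
pose l := take s (enum V).
have hu : uniq l by apply: take_uniq; exact: enum_uniq.
exists [set x in l]; split.
- by apply/fintype.subsetP => x; rewrite inE => /mem_take; rewrite mem_enum.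
- by rewrite cardsE (card_uniqP hu) size_take; case: ifP => // /negbT; rewrite -leqNgt.
- have sub : [set x in l] \subset V.
    by apply/fintype.subsetP => x; rewrite inE => /mem_take; rewrite mem_enum.
  rewrite cardsD (finset.setIidPr sub) cardsE (card_uniqP hu) size_take -cardE.
  by case: ifP => h; lia.
Qed.

Section ReIm.
Variable R : realType.

Definition Re_mx m k (v : 'M[R[i]]_(m, k)) : 'M[R]_(m, k) := map_mx (@complex.Re R) v.
Definition Im_mx m k (v : 'M[R[i]]_(m, k)) : 'M[R]_(m, k) := map_mx (@complex.Im R) v.

Lemma Re_mul m k l (B : 'M[R]_(m, k)) (v : 'M[R[i]]_(k, l)) :
  Re_mx (cplx_mx B *m v) = B *m Re_mx v.
Proof.
apply/matrixP => a b; rewrite !mxE.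
apply: (big_ind2 (fun x y => complex.Re x = y)) => //.
  by move=> [x1 x2] y1 [z1 z2] y2 /= -> ->.
by move=> c _; rewrite !mxE; case: (v c b) => z1 z2 /=; rewrite mul0r subr0.
Qed.

Lemma Im_mul m k l (B : 'M[R]_(m, k)) (v : 'M[R[i]]_(k, l)) :
  Im_mx (cplx_mx B *m v) = B *m Im_mx v.
Proof.
apply/matrixP => a b; rewrite !mxE.
apply: (big_ind2 (fun x y => complex.Im x = y)) => //.
  by move=> [x1 x2] y1 [z1 z2] y2 /= -> ->.
by move=> c _; rewrite !mxE; case: (v c b) => z1 z2 /=; rewrite mul0r addr0.
Qed.

Lemma Re_mxE m k (M : 'M[R[i]]_(m, k)) a b : Re_mx M a b = complex.Re (M a b).
Proof. by rewrite mxE. Qed.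
Lemma Im_mxE m k (M : 'M[R[i]]_(m, k)) a b : Im_mx M a b = complex.Im (M a b).
Proof. by rewrite mxE. Qed.

End ReIm.

Lemma nec_dir (R : realType) (p n' s : nat) (A : 'M[R]_n'.+1) (C : 'M[R]_(p, n'.+1))
  (adj : rel 'I_p) : (0 < p)%N ->
  DSST_solvable A C adj s -> sparse_detectable (2 * s) A C.
Proof.
move=> hp [alg halg] r L [V [hV hker]] mu v vn0 eig hmu.
apply/negP => /eqP h0.
set Ac := cplx_mx A; set Cc := cplx_mx C.
have hpow : forall t, Ac ^+ t *m v = mu ^+ t *: v.
  elim=> [|t IH]; first by rewrite expr0 mul1mx scale1r.
  by rewrite exprS -mulmxE -mulmxA IH -scalemxAr eig scalerA -exprSr.
have hCv : forall j, j \notin V -> (Cc *m v) j 0 = 0.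
  have hRe : L *m Re_mx (Cc *m v) = 0.
    by rewrite -Re_mul mulmxA -cplx_mxM h0; apply/matrixP => a b; rewrite !mxE.
  have hIm : L *m Im_mx (Cc *m v) = 0.
    by rewrite -Im_mul mulmxA -cplx_mxM h0; apply/matrixP => a b; rewrite !mxE.
  move=> j hj.
  have := (hker _).1 hRe j hj; have := (hker _).1 hIm j hj.
  rewrite Re_mxE Im_mxE.
  by case: ((Cc *m v) j 0) => a b /= -> ->.
set wr := Re_mx v; set wi := Im_mx v.
have hRt : forall t, A ^+ t *m wr = Re_mx (mu ^+ t *: v).
  by move=> t; rewrite -Re_mul cplx_mxX hpow.
have hIt : forall t, A ^+ t *m wi = Im_mx (mu ^+ t *: v).
  by move=> t; rewrite -Im_mul cplx_mxX hpow.
have hrow : forall w : 'cV[R]_n'.+1, forall j, (row j C *m w) 0 0 = (C *m w) j 0.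
  by move=> w j; rewrite -row_mul [LHS]mxE.
have hzr : forall t j, j \notin V -> (row j C *m (A ^+ t *m wr)) 0 0 = 0.
  move=> t j hj; rewrite hrow hRt -Re_mul Re_mxE -scalemxAr mxE.
  by rewrite -/Cc hCv // mulr0.
have hzi : forall t j, j \notin V -> (row j C *m (A ^+ t *m wi)) 0 0 = 0.
  move=> t j hj; rewrite hrow hIt -Im_mul Im_mxE -scalemxAr mxE.
  by rewrite -/Cc hCv // mulr0.
have [w [hzw hnw]] : exists w : 'cV[R]_n'.+1,
    (forall t j, j \notin V -> (row j C *m (A ^+ t *m w)) 0 0 = 0) /\
    ~ t0 (fun t => `|A ^+ t *m w|).
  case: (pselect (t0 (fun t => `|A ^+ t *m wr|))) => hr; last by exists wr.
  case: (pselect (t0 (fun t => `|A ^+ t *m wi|))) => hi; last by exists wi.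
  exfalso.
  have [k hk] : exists k, v k 0 != 0.
    case: (pselect (exists k, v k 0 != 0)) => [//|hno].
    exfalso; move/eqP: vn0; apply; apply/matrixP => a b; rewrite (ord1 b) mxE.
    case: (eqVneq (v a 0) 0) => // hne; exfalso; apply: hno; by exists a.
  set c := cmod (v k 0).
  have c0 : 0 < c by rewrite lt_def cmod_eq0 hk cmod_ge0.
  have h2 : 0 < c / 2 by lra.
  have [N1 HN1] := hr _ h2; have [N2 HN2] := hi _ h2.
  set t := maxn N1 N2.
  have e1 := HN1 t (leq_maxl _ _); have e2 := HN2 t (leq_maxr _ _).
  rewrite ger0_norm ?normr_ge0 // in e1; rewrite ger0_norm ?normr_ge0 // in e2.
  have b1 := @norm_entry R _ (A ^+ t *m wr) k.
  have b2 := @norm_entry R _ (A ^+ t *m wi) k.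
  rewrite hRt Re_mxE mxE in b1; rewrite hIt Im_mxE mxE in b2.
  have b3 := @cmod_ReIm R (mu ^+ t * v k 0).
  have b4 : c <= cmod (mu ^+ t * v k 0).
    rewrite cmodM cmodX; apply: ler_peMl; first exact: cmod_ge0.
    exact: exprn_ege1.
  have : c < c.
    apply: (le_lt_trans b4); apply: (le_lt_trans b3).
    apply: (le_lt_trans (lerD b1 b2)); rewrite [X in _ < X](splitr c).
    by rewrite -hRt -hIt; exact: ltrD e1 e2.
  by rewrite ltxx.
have [V1 [hV1s hV1 hV2]] := split_set hV.
set V2 := V :\: V1.
pose cw j t := (row j C *m (A ^+ t *m w)) 0 0.
pose ea := fun j t => if j \in V1 then - cw j t else 0.
pose eb := fun j t => if j \in V2 then cw j t else 0.
have hea : forall j, j \notin V1 -> forall t, ea j t = 0.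
  by move=> j hj t; rewrite /ea (negbTE hj).
have heb : forall j, j \notin V2 -> forall t, eb j t = 0.
  by move=> j hj t; rewrite /eb (negbTE hj).
have hy : meas A C w ea = meas A C 0 eb.
  apply: funext => j; apply: funext => t; rewrite /meas /traj mulmx0 mulmx0 [X in _ = X + _]mxE add0r.
  rewrite /ea /eb /cw /V2 inE.
  case: (boolP (j \in V1)) => h1 /=; first by rewrite addrN.
  rewrite addr0; case: (boolP (j \in V)) => // hj.
  exact: hzw.
pose i0 : 'I_p := Ordinal hp.
have ha := halg w V1 ea hV1 hea i0.
have hb := halg 0 V2 eb hV2 heb i0.
rewrite hy in ha.
apply: hnw.
have ta := @cvg_t0 _ _ ha; have tb := @cvg_t0 _ _ hb.
move=> eps heps; have h2 : 0 < eps / 2 by lra.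
have [N1 HN1] := ta _ h2; have [N2 HN2] := tb _ h2.
exists (maxn N1 N2) => t ht.
have e1 := HN1 t (leq_trans (leq_maxl _ _) ht).
have e2 := HN2 t (leq_trans (leq_maxr _ _) ht).
move: e1 e2; rewrite /traj mulmx0 subr0.
set E := estimate _ _ _ _ _.
rewrite !ger0_norm ?normr_ge0 // => e1 e2.
have tri : `|A ^+ t *m w| <= `|E| + `|E - A ^+ t *m w|.
  have {1}-> : A ^+ t *m w = E - (E - A ^+ t *m w) by rewrite opprB addrC subrK.
  exact: ler_normB.
apply: (le_lt_trans tri).
rewrite [X in _ < X](splitr eps); exact: ltrD e2 e1.
Qed.


Unset Implicit Arguments.
Set Strict Implicit.

Theorem theorem1 (R : realType) (n p s : nat) (A : 'M[R]_n) (C : 'M[R]_(p, n))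
    (adj : rel 'I_p) :
  (0 < p)%N ->
  symmetric adj ->
  irreflexive adj ->
  (forall i j : 'I_p, connect adj i j) ->
  cond_v A (laplacian R adj) ->
  (DSST_solvable A C adj s <-> sparse_detectable (2 * s) A C).
Proof.
move=> hp hsym hirr hc.
case: n A C => [|n'] A C hv.
  split => _.
    by move=> r L _ mu v; rewrite flatmx0 eqxx.
  exists (@flood R p 0 (fun _ _ => 0)) => x0 S e _ _ i.
  apply: t0_cvg => eps heps; exists 0%N => t _.
  by rewrite (flatmx0 (_ - _)) !normr0.
split; [exact: nec_dir hp | exact: suff_dir hc].
Qed.
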